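(* Let $(G_n)$ be a sequence of graphs satisfying conditions (1')–(3') below, and let $A$ be the adjacency matrix of $G_n$. Then for all sufficiently large $n$, the matrix $\frac{1}{\delta-9\overline\lambda}A$ is doubly superstochastic.
   Context: $G_n$ has vertex set $V$, $|V|=n$, average degree $d$, minimum degree $\delta$, maximum degree $\Delta$. For $U,W\subseteq V$, $e(U,W)$ is the number of ordered pairs $(u,w)\in U\times W$ with $u$ adjacent to $w$. A number $\overline\lambda=\overline\lambda(n)>0$ is said to control the edge distribution of $G_n$ if for all $U,W\subseteq V$: $\left|e(U,W)-\frac{d}{n}|U||W|\right|\le\overline\lambda\sqrt{|U||W|}$. Conditions: there is such $\overline\lambda$ with (1') $\Delta-\delta\le\overline\lambda$; (2') $\frac{d}{\overline\lambda}/\log^2n\to\infty$; (3') $\log d\cdot\log\frac{d}{\overline\lambda}/\log n\to\infty$. A nonnegative square matrix $M$ is doubly superstochastic if there is a doubly stochastic matrix $B$ (nonnegative, all row and column sums equal to 1) with $B\le M$ entrywise. *)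

(* Defs.v *)
From HB Require Import structures.
From mathcomp Require Import all_boot all_order all_algebra.
From mathcomp Require Import all_classical all_reals all_analysis.
Set Implicit Arguments. Unset Strict Implicit. Unset Printing Implicit Defensive.
Import Order.TTheory GRing.Theory Num.Theory.
Local Open Scope ring_scope.

Definition simple_graph (n : nat) (G : rel 'I_n) : Prop :=
  symmetric G /\ irreflexive G.

Definition deg (n : nat) (G : rel 'I_n) (v : 'I_n) : nat := #|[set w | G v w]|.

Definition avg_deg (R : realType) (n : nat) (G : rel 'I_n) : R :=
  (\sum_(v : 'I_n) (deg G v)%:R) / n%:R.

Definition min_deg (n : nat) (G : rel 'I_n) : nat := \big[minn/n]_(v : 'I_n) deg G v.
Definition max_deg (n : nat) (G : rel 'I_n) : nat := \max_(v : 'I_n) deg G v.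

Definition e_count (n : nat) (G : rel 'I_n) (U W : {set 'I_n}) : nat :=
  #|[set p : 'I_n * 'I_n | [&& p.1 \in U, p.2 \in W & G p.1 p.2]]|.

Definition controls (R : realType) (n : nat) (G : rel 'I_n) (lam : R) : Prop :=
  forall U W : {set 'I_n},
    `| (e_count G U W)%:R - avg_deg R G / n%:R * #|U|%:R * #|W|%:R |
      <= lam * Num.sqrt (#|U|%:R * #|W|%:R).

Definition adjacency_matrix (R : realType) (n : nat) (G : rel 'I_n) : 'M[R]_n :=
  \matrix_(i, j) (G i j)%:R.

Definition doubly_stochastic (R : realType) (n : nat) (B : 'M[R]_n) : Prop :=
  (forall i j, 0 <= B i j) /\
  (forall i, \sum_j B i j = 1) /\
  (forall j, \sum_i B i j = 1).

Definition doubly_superstochastic (R : realType) (n : nat) (M : 'M[R]_n) : Prop :=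
  (forall i j, 0 <= M i j) /\
  exists B : 'M[R]_n, doubly_stochastic B /\ forall i j, B i j <= M i j.

(* Main.v *)
Require Import Defs.
From HB Require Import structures.
From mathcomp Require Import all_boot all_order all_algebra.
From mathcomp Require Import all_classical all_reals all_analysis.
From mathcomp Require Import ring lra.
Import Order.TTheory GRing.Theory Num.Theory.
Import numFieldNormedType.Exports.
Local Open Scope ring_scope.

Lemma exmin (R : realFieldType) (T : finType) (F : T -> R) (P : pred T) (t0 : T) :
  P t0 -> exists2 t, P t & forall t', P t' -> F t <= F t'.
Proof.
move=> Pt0; case: (arg_minP F Pt0) => t Pt H.
by exists t.
Qed.

Section Gale.
Variable R : realFieldType.
Variables I J : finType.
Implicit Types (a : I -> R) (b : J -> R) (C : I -> J -> R).

Lemma indT : (true%:R : R) = 1. Proof. by []. Qed.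
Lemma indF : (false%:R : R) = 0. Proof. by []. Qed.

Definition Lf a b C (wa : I -> R) (wb : J -> R) (wc : I -> J -> R) :=
  \sum_i wa i * a i + \sum_j wb j * b j + \sum_i \sum_j wc i j * C i j.

Lemma Lf_comb a b C wa wb wc wa1 wb1 wc1 wa2 wb2 wc2 wa3 wb3 wc3 :
  (forall i, wa i = wa1 i + wa2 i - wa3 i) ->
  (forall j, wb j = wb1 j + wb2 j - wb3 j) ->
  (forall i j, wc i j = wc1 i j + wc2 i j - wc3 i j) ->
  Lf a b C wa wb wc = Lf a b C wa1 wb1 wc1 + Lf a b C wa2 wb2 wc2 - Lf a b C wa3 wb3 wc3.
Proof.
move=> ha hb hc; rewrite /Lf.
have -> : \sum_i wa i * a i = \sum_i wa1 i * a i + \sum_i wa2 i * a i - \sum_i wa3 i * a i.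
  by rewrite -big_split -sumrB; apply: eq_bigr => i _ /=; rewrite ha; ring.
have -> : \sum_j wb j * b j = \sum_j wb1 j * b j + \sum_j wb2 j * b j - \sum_j wb3 j * b j.
  by rewrite -big_split -sumrB; apply: eq_bigr => i _ /=; rewrite hb; ring.
have -> : \sum_i \sum_j wc i j * C i j = \sum_i \sum_j wc1 i j * C i j
   + \sum_i \sum_j wc2 i j * C i j - \sum_i \sum_j wc3 i j * C i j.
  rewrite -big_split -sumrB; apply: eq_bigr => i _ /=.
  by rewrite -big_split -sumrB; apply: eq_bigr => j _ /=; rewrite hc; ring.
ring.
Qed.

Definition slack C a b (S : {set I}) (U : {set J}) :=
  Lf a b C (fun i => - (i \in S)%:R) (fun j => (j \in U)%:R)
    (fun i j => ((i \in S) && (j \notin U))%:R).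

Definition Cond C a b := forall S U, 0 <= slack C a b S U.

Definition Solution C a b (B : I -> J -> R) :=
  (forall i j, 0 <= B i j <= C i j) /\ (forall i, \sum_j B i j = a i) /\
  (forall j, \sum_i B i j = b j).

Definition supp C := #|[set p : I * J | C p.1 p.2 != 0]|.

Lemma sum_delta (T : finType) (t0 : T) (f : T -> R) :
  \sum_t (t == t0)%:R * f t = f t0.
Proof.
rewrite (bigD1 t0) //= eqxx mul1r big1 ?addr0 // => t /negbTE ->; by rewrite mul0r.
Qed.

Lemma sum_delta2 (i0 : I) (j0 : J) (f : I -> J -> R) :
  \sum_i \sum_j f i j * ((i == i0) && (j == j0))%:R = f i0 j0.
Proof.
rewrite -(@sum_delta _ i0 (fun i => f i j0)).
apply: eq_bigr => i _.
rewrite -(@sum_delta _ j0 (fun j => (i == i0)%:R * f i j)) /=.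
apply: eq_bigr => j _.
by case: (i == i0); case: (j == j0); rewrite /= ?mulr0 ?mulr1 ?mul0r ?mul1r.
Qed.

Lemma sol_mono C C' a b B : Solution C' a b B -> (forall i j, C' i j <= C i j) ->
  Solution C a b B.
Proof.
move=> [h1 [h2 h3]] hC; split=> // i j.
by case/andP: (h1 i j) => -> /le_trans ->.
Qed.

Lemma base C a b : (forall i j, C i j = 0) -> \sum_i a i = \sum_j b j -> Cond C a b ->
  Solution C a b (fun _ _ => 0).
Proof.
move=> C0 hab hc.
have hC : forall S U, slack C a b S U = \sum_j (j \in U)%:R * b j - \sum_i (i \in S)%:R * a i.
  move=> S U; rewrite /slack /Lf.
  rewrite (_ : \sum_i \sum_j _ = 0) ?addr0; last first.
    by apply: big1 => i _; apply: big1 => j _; rewrite C0 mulr0.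
  rewrite addrC; congr (_ + _); rewrite -sumrN; apply: eq_bigr => i _; ring.
have bge : forall j, 0 <= b j.
  move=> j; have := hc finset.set0 [set j]; rewrite hC.
  rewrite [X in _ - X]big1; last by move=> i _; rewrite inE indF mul0r.
  by rewrite subr0 (eq_bigr (fun j' => (j' == j)%:R * b j')) ?sum_delta // => j' _; rewrite inE.
have ale : forall i, a i <= 0.
  move=> i; have := hc [set i] finset.set0; rewrite hC.
  rewrite [X in X - _]big1; last by move=> j _; rewrite inE indF mul0r.
  rewrite (eq_bigr (fun i' => (i' == i)%:R * a i')) ?sum_delta; last by move=> i' _; rewrite inE.
  by rewrite sub0r oppr_ge0.
have sb0 : \sum_j b j = 0.
  apply/eqP; rewrite eq_le sumr_ge0 // andbT -hab.
  by apply: sumr_le0.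
have b0 : forall j, b j = 0.
  by move=> j; apply: (psumr_eq0P _ sb0) => //.
have a0 : forall i, a i = 0.
  move=> i; apply/eqP; rewrite -oppr_eq0; apply/eqP.
  apply: (@psumr_eq0P _ _ predT (fun i => - a i)) => //.
    by move=> i' _; rewrite oppr_ge0.
  by rewrite sumrN hab sb0 oppr0.
split; first by move=> i j; rewrite C0 lexx.
by split=> [i|j]; rewrite big1 // ?a0 ?b0.
Qed.


Definition subC C (i0 : I) (j0 : J) (t : R) :=
  fun i j => C i j - ((i == i0) && (j == j0))%:R * t.

Lemma slack_sub C a b i0 j0 t S U :
  slack (subC C i0 j0 t) a b S U = slack C a b S U - ((i0 \in S) && (j0 \notin U))%:R * t.
Proof.
rewrite /slack /Lf /subC.
have -> : \sum_i \sum_j ((i \in S) && (j \notin U))%:R * (C i j - ((i == i0) && (j == j0))%:R * t)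
  = \sum_i \sum_j ((i \in S) && (j \notin U))%:R * C i j
    - \sum_i \sum_j ((i \in S) && (j \notin U))%:R * t * ((i == i0) && (j == j0))%:R.
  by rewrite -sumrB; apply: eq_bigr => i _; rewrite -sumrB; apply: eq_bigr => j _; ring.
rewrite (sum_delta2 i0 j0 (fun i j => ((i \in S) && (j \notin U))%:R * t)).
ring.
Qed.

Section Decomp.
Variables (C : I -> J -> R) (a : I -> R) (b : J -> R) (S : {set I}) (U : {set J}).
Definition C2 := fun i j => ((i \in S) == (j \in U))%:R * C i j.
Definition a2 := fun i => a i - (i \in S)%:R * \sum_j (j \notin U)%:R * C i j.
Definition b2 := fun j => b j - (j \notin U)%:R * \sum_i (i \in S)%:R * C i j.

Lemma C2_ge0 : (forall i j, 0 <= C i j) -> forall i j, 0 <= C2 i j.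
Proof. by move=> h i j; rewrite /C2 mulr_ge0 ?ler0n. Qed.

Lemma sum_a2b2 : \sum_i a i = \sum_j b j -> \sum_i a2 i = \sum_j b2 j.
Proof.
move=> h; rewrite /a2 /b2 !sumrB h; congr (_ - _).
rewrite (eq_bigr (fun i => \sum_j (i \in S)%:R * ((j \notin U)%:R * C i j))); last first.
  by move=> i _; rewrite mulr_sumr.
rewrite exchange_big /=; apply: eq_bigr => j _; rewrite mulr_sumr.
by apply: eq_bigr => i _; ring.
Qed.

Lemma slack2 S' U' : slack C2 a2 b2 S' U' = Lf a b C (fun i => - (i \in S')%:R)
  (fun j => (j \in U')%:R)
  (fun i j => (i \in S')%:R * (i \in S)%:R * (j \notin U)%:R
     - (j \in U')%:R * (j \notin U)%:R * (i \in S)%:R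
     + ((i \in S') && (j \notin U'))%:R * ((i \in S) == (j \in U))%:R).
Proof.
rewrite /slack /Lf /a2 /b2 /C2.
have hA : \sum_i - (i \in S')%:R * (a i - (i \in S)%:R * \sum_j (j \notin U)%:R * C i j)
  = \sum_i - (i \in S')%:R * a i
    + \sum_i \sum_j (i \in S')%:R * (i \in S)%:R * (j \notin U)%:R * C i j.
  rewrite -big_split; apply: eq_bigr => i _ /=.
  have -> : \sum_j (i \in S')%:R * (i \in S)%:R * (j \notin U)%:R * C i j
     = (i \in S')%:R * (i \in S)%:R * \sum_j (j \notin U)%:R * C i j.
    by rewrite mulr_sumr; apply: eq_bigr => j _; ring.
  ring.
have hB : \sum_j (j \in U')%:R * (b j - (j \notin U)%:R * \sum_i (i \in S)%:R * C i j)
  = \sum_j (j \in U')%:R * b j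
    - \sum_i \sum_j (j \in U')%:R * (j \notin U)%:R * (i \in S)%:R * C i j.
  rewrite [X in _ = _ - X]exchange_big /= -sumrB; apply: eq_bigr => j _ /=.
  have -> : \sum_i (j \in U')%:R * (j \notin U)%:R * (i \in S)%:R * C i j
     = (j \in U')%:R * (j \notin U)%:R * \sum_i (i \in S)%:R * C i j.
    by rewrite mulr_sumr; apply: eq_bigr => i _; ring.
  ring.
have hC : \sum_i \sum_j ((i \in S') && (j \notin U'))%:R * (((i \in S) == (j \in U))%:R * C i j)
  = \sum_i \sum_j ((i \in S') && (j \notin U'))%:R * ((i \in S) == (j \in U))%:R * C i j.
  by apply: eq_bigr => i _; apply: eq_bigr => j _; rewrite mulrA.
rewrite hA hB hC.
have -> : \sum_i \sum_j ((i \in S')%:R * (i \in S)%:R * (j \notin U)%:R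
     - (j \in U')%:R * (j \notin U)%:R * (i \in S)%:R
     + ((i \in S') && (j \notin U'))%:R * ((i \in S) == (j \in U))%:R) * C i j
  = \sum_i \sum_j (i \in S')%:R * (i \in S)%:R * (j \notin U)%:R * C i j
    - \sum_i \sum_j (j \in U')%:R * (j \notin U)%:R * (i \in S)%:R * C i j
    + \sum_i \sum_j ((i \in S') && (j \notin U'))%:R * ((i \in S) == (j \in U))%:R * C i j.
  rewrite -sumrB -big_split; apply: eq_bigr => i _ /=.
  rewrite -sumrB -big_split; apply: eq_bigr => j _ /=; ring.
ring.
Qed.

Lemma cond2 : Cond C a b -> slack C a b S U = 0 -> Cond C2 a2 b2.
Proof.
move=> hc ht S' U'; rewrite slack2.
rewrite (@Lf_comb a b C _ _ _
  (fun i => - (i \in S :|: S')%:R) (fun j => (j \in U :|: U')%:R)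
  (fun i j => ((i \in S :|: S') && (j \notin U :|: U'))%:R)
  (fun i => - (i \in S :&: S')%:R) (fun j => (j \in U :&: U')%:R)
  (fun i j => ((i \in S :&: S') && (j \notin U :&: U'))%:R)
  (fun i => - (i \in S)%:R) (fun j => (j \in U)%:R)
  (fun i j => ((i \in S) && (j \notin U))%:R)).
- have h1 := hc (S :|: S') (U :|: U'); have h2 := hc (S :&: S') (U :&: U').
  rewrite /slack in h1 h2 ht; lra.
- move=> i; rewrite !inE.
  by case: (i \in S); case: (i \in S'); rewrite /= ?indT ?indF; lra.
- move=> j; rewrite !inE.
  by case: (j \in U); case: (j \in U'); rewrite /= ?indT ?indF; lra.
- move=> i j; rewrite !inE.
  by case: (i \in S); case: (i \in S'); case: (j \in U); case: (j \in U');
    rewrite /= ?indT ?indF; lra.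
Qed.

Lemma lift B2 : (forall i j, 0 <= C i j) -> Solution C2 a2 b2 B2 ->
  Solution C a b (fun i j => B2 i j + (i \in S)%:R * (j \notin U)%:R * C i j).
Proof.
move=> hC [hB [hr hc]]; split.
  move=> i j; have := hB i j; have := hC i j; rewrite /C2.
  by case: (i \in S); case: (j \in U); rewrite /= ?indT ?indF => h /andP[h1 h2];
    apply/andP; split; lra.
split.
  move=> i; rewrite big_split /= hr /a2.
  have -> : \sum_j (i \in S)%:R * (j \notin U)%:R * C i j
     = (i \in S)%:R * \sum_j (j \notin U)%:R * C i j.
    by rewrite mulr_sumr; apply: eq_bigr => j _; ring.
  ring.
move=> j; rewrite big_split /= hc /b2.
have -> : \sum_i (i \in S)%:R * (j \notin U)%:R * C i j
   = (j \notin U)%:R * \sum_i (i \in S)%:R * C i j.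
  by rewrite mulr_sumr; apply: eq_bigr => i _; ring.
ring.
Qed.
End Decomp.

Lemma supp_lt C C' i0 j0 : (forall i j, C' i j != 0 -> C i j != 0) ->
  C' i0 j0 = 0 -> C i0 j0 != 0 -> (supp C' < supp C)%N.
Proof.
move=> h h0 h1; apply: proper_card; apply/fintype.properP; split.
  by apply/fintype.subsetP => p; rewrite !inE; exact: h.
by exists (i0, j0); rewrite !inE /= ?h0 ?eqxx.
Qed.


Lemma gale_ind m : forall C a b, (supp C <= m)%N -> (forall i j, 0 <= C i j) ->
  \sum_i a i = \sum_j b j -> Cond C a b -> exists B, Solution C a b B.
Proof.
elim: m => [|m IH] C a b hs hC hab hc.
  exists (fun _ _ => 0); apply: base => // i j.
  move: hs; rewrite leqn0 /supp => /eqP/cards0_eq hs0.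
  case: (C i j =P 0) => // /eqP hne.
  have : (i, j) \in [set p : I * J | C p.1 p.2 != 0] by rewrite inE /=.
  by rewrite hs0 inE.
case: (pickP (fun p : I * J => C p.1 p.2 != 0)) => [[i0 j0] /= hne|h0]; last first.
  exists (fun _ _ => 0); apply: base => // i j.
  by have := h0 (i, j) => /= /negbFE/eqP.
have [pm Ppm hmin] := @exmin R _ (fun p : {set I} * {set J} => slack C a b p.1 p.2)
  (fun p => (i0 \in p.1) && (j0 \notin p.2)) ([set i0], finset.set0)
  (ltac:(by rewrite /= !inE eqxx)).
move: Ppm => /= Ppm.
set s := slack C a b pm.1 pm.2.
have hs0 : 0 <= s := hc _ _.
have hsub : forall t, 0 <= t -> forall i j, subC C i0 j0 t i j <= C i j.
  move=> t ht i j; rewrite /subC lerBlDr lerDl mulr_ge0 ?ler0n //.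
have hcondsub : forall t, t <= s -> Cond (subC C i0 j0 t) a b.
  move=> t hts S U; rewrite slack_sub.
  case hP: ((i0 \in S) && (j0 \notin U)); rewrite ?indT ?indF.
    by have := hmin (S, U) hP; rewrite /= -/s; lra.
  by have := hc S U; lra.
have hCsub : forall t, 0 <= t <= C i0 j0 -> forall i j, 0 <= subC C i0 j0 t i j.
  move=> t /andP[ht1 ht2] i j; rewrite /subC.
  case: andP => [[/eqP -> /eqP ->]|_]; rewrite ?indT ?indF; have := hC i j; lra.
have hsuppsub : forall t i j, subC C i0 j0 t i j != 0 -> C i j != 0.
  move=> t i j; rewrite /subC.
  by case: andP => [[/eqP -> /eqP ->]|_]; rewrite ?indT ?indF ?mul0r ?subr0.
have Cpos : 0 < C i0 j0 by rewrite lt_def hne hC.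
case: (leP (C i0 j0) s) => hcs.
  have hsupp : (supp (subC C i0 j0 (C i0 j0)) <= m)%N.
    rewrite -ltnS; apply: leq_trans hs.
    apply: (@supp_lt _ _ i0 j0) => //.
      exact: hsuppsub.
    by rewrite /subC !eqxx indT mul1r subrr.
  have [B hB] := IH _ a b hsupp (hCsub _ (ltac:(by apply/andP; split))) hab
    (hcondsub _ hcs).
  by exists B; apply: sol_mono hB _; apply: hsub; exact: hC.
set C' := subC C i0 j0 s.
have hC' : forall i j, 0 <= C' i j.
  by apply: hCsub; rewrite hs0 ltW.
have htight : slack C' a b pm.1 pm.2 = 0.
  by rewrite /C' slack_sub Ppm indT mul1r subrr.
have hsupp : (supp (C2 C' pm.1 pm.2) <= m)%N.
  rewrite -ltnS; apply: leq_trans hs.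
  apply: (@supp_lt _ _ i0 j0) => //.
    move=> i j; rewrite /C2 => h; apply: (hsuppsub s).
    by apply: contraNN h => /eqP e; rewrite /C' e mulr0.
  rewrite /C2; move: (Ppm) => /andP[-> /negbTE ->].
  by rewrite /= indF mul0r.
have [B2 hB2] := IH _ _ _ hsupp (C2_ge0 _ _ _ hC') (sum_a2b2 _ _ _ _ _ hab)
  (cond2 _ _ _ _ _ (hcondsub _ (lexx s)) htight).
exists (fun i j => B2 i j + (i \in pm.1)%:R * (j \notin pm.2)%:R * C' i j).
by apply: sol_mono (lift _ _ _ _ _ _ hC' hB2) _; apply: hsub.
Qed.

Theorem gale C a b : (forall i j, 0 <= C i j) ->
  \sum_i a i = \sum_j b j -> Cond C a b -> exists B, Solution C a b B.
Proof. exact: (@gale_ind (supp C)). Qed.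

End Gale.


Lemma sideA_real (R : realFieldType) (N a x dl Dl d lam e e1 dS sq : R) :
  0 < N -> 0 < lam -> 0 <= x -> x < a -> a <= N ->
  e + e1 = dS -> dl * a <= dS -> e1 <= Dl * x ->
  e1 <= d / N * a * x + lam * sq -> sq <= a ->
  d <= Dl -> Dl - dl <= lam -> 30 * lam <= d ->
  (x <= 9 * (a - x) \/ 4 * a <= N) -> (dl - 9 * lam) * (a - x) <= e.
Proof.
move=> hN hl hx hxa haN hs hdS he1 hdisc hsq hdD hDd h30 [hc|hc].
  have p1 : 0 <= (lam - (Dl - dl)) * x by rewrite mulr_ge0 // subr_ge0.
  have p2 : 0 <= lam * (9 * (a - x) - x) by rewrite mulr_ge0 ?subr_ge0 // ltW.
  nra.
have hq : a / N <= 1 / 4.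
  by rewrite ler_pdivrMr //; lra.
have p1 : 0 <= d * x * (1 / 4 - a / N) by rewrite !mulr_ge0 ?subr_ge0 //; lra.
have p2 : d / N * a * x = d * x * (a / N) by rewrite mulrC !mulrA; ring.
have p3 : 0 <= x * (dl + lam - d) by rewrite mulr_ge0 //; lra.
have p4 : 0 <= lam * (a - x) by rewrite mulr_ge0 //; lra.
have p5 : 0 <= x * (3 * dl - 5 * lam) by rewrite mulr_ge0 //; lra.
have p6 : 0 <= lam * (a - sq) by rewrite mulr_ge0 //; lra.
nra.
Qed.

Lemma sideC_real (R : realFieldType) (N a b d dl lam e sq : R) :
  0 < N -> 0 < lam -> a <= N -> b <= N -> 0 < a + b - N -> N < 4 * a -> N < 4 * b ->
  9 * (a + b - N) < N - b -> 9 * (a + b - N) < N - a ->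
  d / N * a * b - lam * sq <= e -> sq <= N -> dl <= d -> 30 * lam <= d ->
  (dl - 9 * lam) * (a + b - N) <= e.
Proof.
move=> hN hl haN hbN hk ha hb hx hy he hsq hdl h30.
set dN := d / N.
have hd : d = dN * N by rewrite /dN mulfVK // gt_eqF.
have hdN : 0 <= dN by rewrite /dN divr_ge0 //; lra.
have hx' : 9 * N / 40 <= N - b by lra.
have hy' : 9 * N / 40 <= N - a by lra.
have hxy : (9 * N / 40) * (9 * N / 40) <= (N - b) * (N - a).
  by apply: ler_pM => //; lra.
have h1 : dN * ((9 * N / 40) * (9 * N / 40)) <= dN * ((N - b) * (N - a)).
  by apply: ler_wpM2l.
have hid : dN * a * b = dN * N * (a + b - N) + dN * ((N - b) * (N - a)) by ring.
have h2 : lam * sq <= lam * N by apply: ler_wpM2l => //; lra.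
have h3 : 0 <= lam * N by apply: mulr_ge0; lra.
have h4 : dl * (a + b - N) <= d * (a + b - N) by apply: ler_wpM2r => //; lra.
rewrite -/dN in he.
rewrite hd in h30 h4.
nra.
Qed.

Section Graph.
Variable R : realType.
Variable n : nat.
Variable G : rel 'I_n.

Definition E (S T : {set 'I_n}) : R :=
  \sum_i \sum_j ((i \in S) && (j \in T))%:R * (G i j)%:R.

Lemma e_countE S T : (e_count G S T)%:R = E S T.
Proof.
rewrite /E pair_bigA /e_count -sum1_card big_mkcond /= natr_sum.
apply: eq_bigr => p _; rewrite inE.
by case: (p.1 \in S); case: (p.2 \in T); case: (G p.1 p.2); rewrite /= ?mulr1 ?mulr0 ?mul0r.
Qed.

Lemma degE v : (deg G v)%:R = \sum_j (G v j)%:R :> R.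
Proof.
rewrite /deg -sum1_card big_mkcond /= natr_sum.
by apply: eq_bigr => j _; rewrite inE; case: (G v j).
Qed.

Lemma sum_ind (S : {set 'I_n}) : \sum_i (i \in S)%:R = #|S|%:R :> R.
Proof.
rewrite -sum1_card natr_sum [RHS]big_mkcond /=.
by apply: eq_bigr => j _; case: (j \in S).
Qed.

Lemma E_ge0 S T : 0 <= E S T.
Proof. by apply: sumr_ge0 => i _; apply: sumr_ge0 => j _; rewrite mulr_ge0. Qed.

Lemma E_split S T : E S T + E S (~: T) = \sum_i (i \in S)%:R * (deg G i)%:R.
Proof.
rewrite /E -big_split; apply: eq_bigr => i _ /=.
rewrite -big_split degE mulr_sumr; apply: eq_bigr => j _ /=.
rewrite inE; case: (i \in S); case: (j \in T); rewrite /= ?mulr1 ?mulr0 ?mul0r ?mul1r;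
  by rewrite ?addr0 ?add0r.
Qed.

Hypothesis Gsym : symmetric G.

Lemma E_sym S T : E S T = E T S.
Proof.
rewrite /E exchange_big; apply: eq_bigr => i _; apply: eq_bigr => j _ /=.
by rewrite Gsym andbC.
Qed.

Lemma E_le S T : E S T <= \sum_j (j \in T)%:R * (deg G j)%:R.
Proof.
rewrite E_sym /E; apply: ler_sum => i _; rewrite degE mulr_sumr.
apply: ler_sum => j _; rewrite Gsym.
by case: (i \in T); case: (j \in S); case: (G j i); rewrite /= ?mulr1 ?mulr0 ?mul0r ?mul1r.
Qed.

Lemma bigmin_le_seq (r : seq 'I_n) x (F : 'I_n -> nat) v :
  v \in r -> (\big[minn/x]_(i <- r) F i <= F v)%N.
Proof.
elim: r => // i r IH; rewrite inE big_cons => /orP[/eqP ->|hv].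
  exact: geq_minl.
exact: leq_trans (geq_minr _ _) (IH hv).
Qed.

Lemma min_deg_le v : (min_deg G <= deg G v)%N.
Proof. by apply: bigmin_le_seq; rewrite mem_index_enum. Qed.

Lemma max_deg_ge v : (deg G v <= max_deg G)%N.
Proof. exact: leq_bigmax. Qed.

Lemma sum_deg_ge (S : {set 'I_n}) :
  (min_deg G)%:R * #|S|%:R <= \sum_i (i \in S)%:R * (deg G i)%:R :> R.
Proof.
rewrite -sum_ind mulr_sumr; apply: ler_sum => i _.
by case: (i \in S); rewrite ?mulr1 ?mulr0 ?mul1r ?mul0r ?ler_nat ?min_deg_le.
Qed.

Lemma sum_deg_le (S : {set 'I_n}) :
  \sum_i (i \in S)%:R * (deg G i)%:R <= (max_deg G)%:R * #|S|%:R :> R.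
Proof.
rewrite -sum_ind mulr_sumr; apply: ler_sum => i _.
by case: (i \in S); rewrite ?mulr1 ?mulr0 ?mul1r ?mul0r ?ler_nat ?max_deg_ge.
Qed.


Variable lam : R.
Hypothesis hn : (0 < n)%N.
Hypothesis hlam : 0 < lam.
Hypothesis hctrl : controls G lam.
Hypothesis hDd : (max_deg G)%:R - (min_deg G)%:R <= lam.
Hypothesis h30 : 30 * lam <= avg_deg R G.

Let N : R := n%:R.
Let dl : R := (min_deg G)%:R.
Let Dl : R := (max_deg G)%:R.
Let d : R := avg_deg R G.

Lemma hN : 0 < N. Proof. by rewrite /N ltr0n. Qed.

Lemma sumT : \sum_i (i \in [set: 'I_n])%:R * (deg G i)%:R = \sum_v (deg G v)%:R :> R.
Proof. by apply: eq_bigr => i _; rewrite inE mul1r. Qed.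

Lemma cardT' : #|[set: 'I_n]|%:R = N.
Proof. by rewrite cardsT card_ord. Qed.

Lemma dl_le_d : dl <= d.
Proof.
have := sum_deg_ge [set: 'I_n]; rewrite sumT cardT' => h.
by rewrite /d /avg_deg ler_pdivlMr ?hN.
Qed.

Lemma d_le_Dl : d <= Dl.
Proof.
have := sum_deg_le [set: 'I_n]; rewrite sumT cardT' => h.
by rewrite /d /avg_deg ler_pdivrMr ?hN.
Qed.

Lemma card_le (S : {set 'I_n}) : #|S|%:R <= N.
Proof. by rewrite /N ler_nat; apply: leq_trans (max_card _) _; rewrite card_ord. Qed.

Lemma cardC' (S : {set 'I_n}) : #|~: S|%:R = N - #|S|%:R.
Proof. by rewrite /N; apply/eqP; rewrite eq_sym subr_eq addrC -natrD (cardsC S) card_ord. Qed.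

Lemma disc (S T : {set 'I_n}) :
  `| E S T - d / N * #|S|%:R * #|T|%:R | <= lam * Num.sqrt (#|S|%:R * #|T|%:R).
Proof. by rewrite -e_countE; apply: hctrl. Qed.

Lemma sideA (S T : {set 'I_n}) :
  0 < #|S|%:R + #|T|%:R - N ->
  (N - #|T|%:R <= 9 * (#|S|%:R + #|T|%:R - N)) || (4 * #|S|%:R <= N) ->
  (dl - 9 * lam) * (#|S|%:R + #|T|%:R - N) <= E S T.
Proof.
move=> hk hc.
set a : R := #|S|%:R; set b : R := #|T|%:R.
have ha := card_le S; have hb := card_le T.
have hdisc := disc S (~: T); rewrite cardC' -/a -/b in hdisc.
move: hdisc; rewrite ler_norml => /andP[_ hdisc].
have he1 : E S (~: T) <= Dl * (N - b).
  apply: le_trans (E_le _ _) _; rewrite -cardC'; exact: sum_deg_le.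
have hsq : Num.sqrt (a * (N - b)) <= a.
  apply: (@le_trans _ _ (Num.sqrt (a ^+ 2))); last first.
    by rewrite sqrtr_sqr ger0_norm // /a ler0n.
  apply: ler_wsqrtr; rewrite expr2 ler_wpM2l ?ler0n //; lra.
have := @sideA_real R N a (N - b) dl Dl d lam (E S T) (E S (~: T))
  (\sum_i (i \in S)%:R * (deg G i)%:R) (Num.sqrt (a * (N - b))) hN hlam.
have -> : a - (N - b) = a + b - N by ring.
apply; first (by lra); first (by lra); first (by lra); first exact: E_split;
  first (exact: sum_deg_ge); first exact: he1.
- lra.
- exact: hsq.
- exact: d_le_Dl.
- exact: hDd.
- exact: h30.
- by case/orP: hc => h; [left; lra | right].
Qed.


Lemma sideC (S T : {set 'I_n}) :
  0 < #|S|%:R + #|T|%:R - N -> N < 4 * #|S|%:R -> N < 4 * #|T|%:R ->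
  9 * (#|S|%:R + #|T|%:R - N) < N - #|T|%:R ->
  9 * (#|S|%:R + #|T|%:R - N) < N - #|S|%:R ->
  (dl - 9 * lam) * (#|S|%:R + #|T|%:R - N) <= E S T.
Proof.
move=> hk ha hb hx hy.
set a : R := #|S|%:R; set b : R := #|T|%:R.
have haN := card_le S; have hbN := card_le T.
have hdisc := disc S T; rewrite -/a -/b in hdisc.
move: hdisc; rewrite ler_norml => /andP[hdisc _].
have hsq : Num.sqrt (a * b) <= N.
  apply: (@le_trans _ _ (Num.sqrt (N ^+ 2))); last first.
    by rewrite sqrtr_sqr ger0_norm // ltW // hN.
  apply: ler_wsqrtr; rewrite expr2; apply: ler_pM => //; rewrite /a /b ler0n.
apply: (@sideC_real R N a b d dl lam (E S T) (Num.sqrt (a * b))) => //.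
- exact: hN.
- lra.
- exact: dl_le_d.
Qed.

Lemma dl9 : 0 < dl - 9 * lam.
Proof. have h1 := d_le_Dl; have h2 := hDd; have h3 := h30; rewrite /dl; rewrite /d /Dl in h1; move: h1 h2 h3 hlam; move: ((min_deg G)%:R : R) ((max_deg G)%:R : R) (avg_deg R G) => m M dd h1 h2 h3 hl; lra. Qed.

Lemma key (S T : {set 'I_n}) :
  (dl - 9 * lam) * (#|S|%:R + #|T|%:R - N) <= E S T.
Proof.
set a : R := #|S|%:R; set b : R := #|T|%:R.
have h9 := dl9.
case: (leP (a + b - N) 0) => hk.
  apply: le_trans (E_ge0 _ _); rewrite pmulr_rle0 //.
case hA : ((N - b <= 9 * (a + b - N)) || (4 * a <= N)).
  exact: sideA.
case hB : ((N - a <= 9 * (b + a - N)) || (4 * b <= N)).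
  rewrite E_sym (_ : a + b = b + a); last by rewrite addrC.
  by apply: sideA; [rewrite -/a -/b; lra | rewrite hB].
move: hA hB => /negbT; rewrite negb_or -!ltNge => /andP[h1 h2] /negbT.
rewrite negb_or -!ltNge => /andP[h3 h4].
apply: sideC => //; lra.
Qed.

Lemma superstoch :
  doubly_superstochastic ((dl - 9 * lam)^-1 *: adjacency_matrix R G).
Proof.
have h9 := dl9.
set c := (dl - 9 * lam)^-1.
have hc : 0 < c by rewrite invr_gt0.
split.
  by move=> i j; rewrite !mxE mulr_ge0 // ltW.
have hCge : forall i j, 0 <= c * (G i j)%:R :> R.
  by move=> i j; rewrite mulr_ge0 // ltW.
have hcond : @Cond R 'I_n 'I_n (fun i j => c * (G i j)%:R) (fun _ : 'I_n => 1) (fun _ : 'I_n => 1).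
  move=> S U; rewrite /slack /Lf.
  have hk := key S (~: U).
  rewrite cardC' in hk.
  have e1 : \sum_i - (i \in S)%:R * 1 = - (#|S|%:R) :> R.
    by rewrite -sum_ind -sumrN; apply: eq_bigr => i _; rewrite mulr1.
  have e2 : \sum_j (j \in U)%:R * 1 = #|U|%:R :> R.
    by rewrite -sum_ind; apply: eq_bigr => i _; rewrite mulr1.
  have e3 : \sum_i \sum_j ((i \in S) && (j \notin U))%:R * (c * (G i j)%:R) = c * E S (~: U).
    rewrite /E mulr_sumr; apply: eq_bigr => i _; rewrite mulr_sumr; apply: eq_bigr => j _.
    by rewrite inE; ring.
  rewrite e1 e2 e3.
  have : #|S|%:R + (N - #|U|%:R) - N <= c * E S (~: U).
    by rewrite /c mulrC ler_pdivlMr // mulrC.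
  lra.
have [B [hB1 [hB2 hB3]]] := @gale R 'I_n 'I_n _ _ _ hCge erefl hcond.
exists (\matrix_(i, j) B i j); split.
  split; first by move=> i j; rewrite mxE; case/andP: (hB1 i j).
  split; first by move=> i; rewrite -(hB2 i); apply: eq_bigr => j _; rewrite mxE.
  by move=> j; rewrite -(hB3 j); apply: eq_bigr => i _; rewrite mxE.
by move=> i j; rewrite !mxE; case/andP: (hB1 i j).
Qed.

End Graph.

Local Open Scope classical_set_scope.

Theorem corollary1 (R : realType) (G : forall n : nat, rel 'I_n) (lam : nat -> R)
  (Hsimple : forall n, simple_graph (G n))
  (Hpos : forall n, 0 < lam n)
  (Hctrl : forall n, controls (G n) (lam n))
  (H1 : forall n, (max_deg (G n))%:R - (min_deg (G n))%:R <= lam n)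
  (H2 : (fun n : nat => avg_deg R (G n) / lam n / (ln (n%:R : R)) ^+ 2) @ \oo --> +oo)
  (H3 : (fun n : nat => ln (avg_deg R (G n)) * ln (avg_deg R (G n) / lam n)
                          / ln (n%:R : R)) @ \oo --> +oo) :
  \forall n \near \oo,
    doubly_superstochastic
      (((min_deg (G n))%:R - 9 * lam n)^-1 *: adjacency_matrix R (G n)).
Proof.
move/cvgryPge: H2 => H2.
near=> n.
have hf : 30 <= avg_deg R (G n) / lam n / (ln (n%:R : R)) ^+ 2.
  by near: n; apply: H2.
have hn : expR 1 <= (n%:R : R) by near: n; apply: nbhs_infty_ger.
have he : 0 < expR (1 : R) by apply: expR_gt0.
have hnpos : 0 < (n%:R : R) by apply: lt_le_trans he hn.
have hL : 1 <= ln (n%:R : R).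
  by rewrite -[X in X <= _](expRK 1) ler_ln ?posrE.
have hL2 : 1 <= ln (n%:R : R) ^+ 2 by rewrite expr2; nra.
have hl := Hpos n.
rewrite ler_pdivlMr ?(lt_le_trans ltr01 hL2) // ler_pdivlMr // in hf.
have h30 : 30 * lam n <= avg_deg R (G n) by nra.
apply: superstoch => //.
- by case: (Hsimple n).
- by rewrite -(ltr0n R).
Unshelve. all: by end_near.
Qed.
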